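(* Let $\varphi:\mathbb{R}^n\to(-\infty,\infty]$ be prox-bounded and lower semicontinuous around $\bar x\in\operatorname{dom}\varphi$. Then for all $\lambda>0$ sufficiently small the following are equivalent: (i) $\bar x$ is a local minimizer of $\varphi$; (ii) $\bar x$ is a local minimizer of the Moreau envelope $e_\lambda\varphi$.
   Context: For a proper function $\varphi:\mathbb{R}^n\to(-\infty,\infty]$ and $\lambda>0$, the Moreau envelope is $e_\lambda\varphi(x):=\inf_{y\in\mathbb{R}^n}\{\varphi(y)+\frac{1}{2\lambda}\|y-x\|^2\}$ and the proximal mapping is $\operatorname{Prox}_{\lambda\varphi}(x):=\operatorname{argmin}_{y}\{\varphi(y)+\frac{1}{2\lambda}\|y-x\|^2\}$. The function $\varphi$ is prox-bounded if there is $\lambda>0$ with $e_\lambda\varphi(x)>-\infty$ for some $x$. A point $\bar x\in\operatorname{dom}\varphi$ is a local minimizer of $\varphi$ if $\varphi(x)\ge\varphi(\bar x)$ for all $x$ in some neighborhood of $\bar x$. *)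

(* Defs.v *)
From HB Require Import structures.
From mathcomp Require Import all_boot all_order all_algebra.
From mathcomp Require Import all_classical all_reals ereal.
Set Implicit Arguments. Unset Strict Implicit. Unset Printing Implicit Defensive.
Import Order.TTheory GRing.Theory Num.Theory.
Local Open Scope ring_scope.
Local Open Scope classical_set_scope.
Local Open Scope ereal_scope.

(* R^n is modelled by row vectors 'rV[R]_n; functions with values in
   (-oo, +oo] are modelled as maps into \bar R that never take the value -oo. *)

Definition sqnorm {R : realType} {n : nat} (x : 'rV[R]_n) : R :=
  (\sum_(i < n) (x ord0 i) ^+ 2)%R.

Definition never_minfty {R : realType} {n : nat} (phi : 'rV[R]_n -> \bar R) :=
  forall x, phi x != -oo.

Definition in_dom {R : realType} {n : nat} (phi : 'rV[R]_n -> \bar R) (x : 'rV[R]_n) :=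
  phi x < +oo.

Definition moreau_env {R : realType} {n : nat} (lam : R) (phi : 'rV[R]_n -> \bar R)
  (x : 'rV[R]_n) : \bar R :=
  ereal_inf (range (fun y => phi y + (((2 * lam)^-1 * sqnorm (y - x))%R)%:E)).

Definition prox_bounded {R : realType} {n : nat} (phi : 'rV[R]_n -> \bar R) :=
  exists lam : R, (0 < lam)%R /\ exists x, -oo < moreau_env lam phi x.

Definition lsc_at {R : realType} {n : nat} (phi : 'rV[R]_n -> \bar R) (x : 'rV[R]_n) :=
  forall a : R, a%:E < phi x ->
    exists eps : R, (0 < eps)%R /\
      forall y, (sqnorm (y - x) < eps ^+ 2)%R -> a%:E < phi y.

Definition lsc_around {R : realType} {n : nat} (phi : 'rV[R]_n -> \bar R) (xbar : 'rV[R]_n) :=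
  exists eps : R, (0 < eps)%R /\
    forall x, (sqnorm (x - xbar) < eps ^+ 2)%R -> lsc_at phi x.

Definition local_minimizer {R : realType} {n : nat} (f : 'rV[R]_n -> \bar R) (xbar : 'rV[R]_n) :=
  in_dom f xbar /\
  exists eps : R, (0 < eps)%R /\
    forall x, (sqnorm (x - xbar) < eps ^+ 2)%R -> f xbar <= f x.

(* Main.v *)
Require Import Defs.
From HB Require Import structures.
From mathcomp Require Import all_boot all_order all_algebra.
From mathcomp Require Import all_classical all_reals ereal.
From mathcomp Require Import ring lra.
Import Order.TTheory GRing.Theory Num.Theory.
Local Open Scope ring_scope.

Module Helpers.
Set Implicit Arguments.

Section S.
Variables (R : realType) (n : nat).
Implicit Types (a b v : 'rV[R]_n).

Lemma sqnorm_ge0 v : 0 <= sqnorm v.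
Proof. by apply: sumr_ge0 => i _; rewrite sqr_ge0. Qed.

Lemma sqnorm_sub0 v : sqnorm (v - v) = 0.
Proof. by rewrite subrr /sqnorm big1 // => i _; rewrite mxE expr0n. Qed.

Lemma sqnorm_tri a b : sqnorm (a + b) <= 2 * sqnorm a + 2 * sqnorm b.
Proof.
rewrite /sqnorm !mulr_sumr -big_split /=; apply: ler_sum => i _.
rewrite mxE; set u := a ord0 i; set w := b ord0 i.
have := sqr_ge0 (u - w); nra.
Qed.

Lemma sqnormZ (t : R) v : sqnorm (t *: v) = t ^+ 2 * sqnorm v.
Proof. rewrite /sqnorm mulr_sumr; apply: eq_bigr => i _; rewrite mxE; ring. Qed.

Lemma sqnormN v : sqnorm (- v) = sqnorm v.
Proof. by rewrite -scaleN1r sqnormZ; rewrite sqrrN expr1n mul1r. Qed.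

Lemma sqnormB a b : sqnorm (a - b) = sqnorm (b - a).
Proof. by rewrite -sqnormN opprB. Qed.
End S.
Arguments sqnorm_ge0 {R n}. Arguments sqnorm_sub0 {R n}. Arguments sqnorm_tri {R n}.
Arguments sqnormZ {R n}. Arguments sqnormN {R n}. Arguments sqnormB {R n}.

Section S2.
Variables (R : realType) (n : nat) (phi : 'rV[R]_n -> \bar R).

Lemma env_le lam x y : (moreau_env lam phi x <= phi y + (((2*lam)^-1 * sqnorm (y - x))%R)%:E)%E.
Proof. by apply: ereal_inf_lbound; exists y. Qed.

Lemma env_ge lam x z : (forall y, z <= phi y + (((2*lam)^-1 * sqnorm (y - x))%R)%:E)%E ->
  (z <= moreau_env lam phi x)%E.
Proof. by move=> H; apply: le_ereal_inf_tmp => _ [y _ <-]. Qed.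

Lemma env_phi lam x : (moreau_env lam phi x <= phi x)%E.
Proof. by have := env_le lam x x; rewrite sqnorm_sub0 mulr0 adde0. Qed.

Lemma prox_lb (c l1 lam : R) (x1 : 'rV[R]_n) : never_minfty phi ->
  (forall y, c%:E <= phi y + (((2 * l1)^-1 * sqnorm (y - x1))%R)%:E)%E ->
  0 < lam -> 4 * lam <= l1 ->
  forall x y, ((c - sqnorm(x - x1) / l1 + sqnorm(y - x) / (4 * lam))%R%:E
     <= phi y + (((2*lam)^-1 * sqnorm(y - x))%R)%:E)%E.
Proof.
move=> hnm hc lam0 hl x y.
have l10 : 0 < l1 by lra.
case E: (phi y) => [p| |].
- have H := hc y; rewrite E -EFinD lee_fin in H; rewrite -EFinD lee_fin.
  have tri : sqnorm (y - x1) <= 2 * sqnorm (y - x) + 2 * sqnorm (x - x1).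
    have -> : y - x1 = (y - x) + (x - x1) by rewrite addrA subrK.
    exact: sqnorm_tri.
  have hu : l1^-1 <= (4 * lam)^-1.
    by rewrite lef_pV2 // posrE; lra.
  have e2 : (2 * l1)^-1 = l1^-1 / 2 by rewrite invfM mulrC.
  have e4 : (2 * lam)^-1 = 2 * (4 * lam)^-1.
    by field; rewrite gt_eqF.
  rewrite e2 e4 in H *.
  have Q0 := sqnorm_ge0 (y - x); have S0 := sqnorm_ge0 (x - x1).
  have u0 : 0 <= l1^-1 by rewrite invr_ge0 ltW.
  move: H tri hu Q0 S0 u0.
  set Q := sqnorm (y - x); set S := sqnorm (x - x1); set T := sqnorm (y - x1).
  set u := l1^-1; set v := (4 * lam)^-1.
  move=> H tri hu Q0 S0 u0.
  have h1 : u / 2 * T <= u * Q + u * S.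
    apply: (le_trans (ler_wpM2l _ tri)); first by rewrite divr_ge0.
    by rewrite le_eqVlt; apply/orP; left; apply/eqP; field.
  have h2 : Q * u <= Q * v by rewrite ler_wpM2l.
  have h3 : u * Q = Q * u by rewrite mulrC.
  have h4 : u * S = S * u by rewrite mulrC.
  have h5 : 2 * v * Q = Q * v + Q * v by ring.
  lra.
- by rewrite addye // leey.
- by have := hnm y; rewrite E.
Qed.
End S2.
Arguments env_le {R n}. Arguments env_ge {R n}. Arguments env_phi {R n}. Arguments prox_lb {R n}.

Section S3.
Variables (R : realType) (n : nat) (phi : 'rV[R]_n -> \bar R).

Lemma dir2 (c l1 lam f : R) (x1 xbar : 'rV[R]_n) : never_minfty phi ->
  (forall y, c%:E <= phi y + (((2 * l1)^-1 * sqnorm (y - x1))%R)%:E)%E ->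
  0 < lam -> 4 * lam <= l1 -> phi xbar = f%:E -> lsc_at phi xbar ->
  local_minimizer (moreau_env lam phi) xbar -> local_minimizer phi xbar.
Proof.
move=> hnm hc lam0 hl hf hlsc [_ [eps [eps0 heps]]].
have hlb := prox_lb phi c l1 lam x1 hnm hc lam0 hl xbar.
have hb : ((c - sqnorm (xbar - x1) / l1)%:E <= moreau_env lam phi xbar)%E.
  apply: env_ge => y; apply: le_trans (hlb y); rewrite lee_fin lerDl.
  by rewrite divr_ge0 ?sqnorm_ge0 // mulr_ge0 // ltW.
have hup := env_phi phi lam xbar; rewrite hf in hup.
case Em : (moreau_env lam phi xbar) hb hup => [m| |] hb hup; last first.
- by [].
- by [].
rewrite lee_fin in hup.
have mf : m = f.
  apply/eqP; rewrite eq_le hup /=; rewrite leNgt; apply/negP => mlt.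
  set a := (m + f) / 2.
  have [del [del0 hdel]] : exists del : R, 0 < del /\
      forall y, sqnorm (y - xbar) < del ^+ 2 -> (a%:E < phi y)%E.
    by apply: hlsc; rewrite hf lte_fin /a; lra.
  set s := Num.min (del ^+ 2) (eps ^+ 2 / 2).
  have s0 : 0 < s by rewrite lt_min exprn_gt0 //= divr_gt0 // exprn_gt0.
  have sd : s <= del ^+ 2 by rewrite ge_min lexx.
  have se : s <= eps ^+ 2 / 2 by rewrite ge_min lexx orbT.
  have e20 : 0 < eps ^+ 2 by rewrite exprn_gt0.
  set eta := Num.min (a - m) (s / (2 * lam)).
  have eta0 : 0 < eta.
    by rewrite lt_min divr_gt0 ?mulr_gt0 // andbT subr_gt0 /a; lra.
  have eta1 : eta <= a - m by rewrite ge_min lexx.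
  have eta2 : eta <= s / (2 * lam) by rewrite ge_min lexx orbT.
  have : (moreau_env lam phi xbar < (m + eta)%:E)%E by rewrite Em lte_fin; lra.
  case/ereal_inf_lt => _ [y _ <-] hy.
  case Ep : (phi y) hy => [p| |] hy; last first.
  - by have := hnm y; rewrite Ep.
  - by rewrite addye in hy.
  rewrite -EFinD lte_fin in hy.
  set Q := sqnorm (y - xbar) in hy.
  have Q0 : 0 <= Q by apply: sqnorm_ge0.
  have lam2 : 0 < (2 * lam)^-1 by rewrite invr_gt0 mulr_gt0.
  have [Qd|Qd] := ltP Q (del ^+ 2).
    have := hdel y Qd; rewrite Ep lte_fin => ap.
    have : 0 <= (2 * lam)^-1 * Q by rewrite mulr_ge0 // ltW.
    lra.
  have Qs : s <= Q by apply: le_trans Qd.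
  have Qp : 0 < Q by apply: lt_le_trans Qs.
  set t := s / Q.
  set xt := xbar + t *: (y - xbar).
  have ht : sqnorm (xt - xbar) < eps ^+ 2.
    rewrite /xt addrC addKr sqnormZ -/Q /t.
    have -> : (s / Q) ^+ 2 * Q = s * (s / Q) by field; rewrite gt_eqF.
    have : s / Q <= 1 by rewrite ler_pdivrMr // mul1r.
    move=> h; have : s * (s / Q) <= s by apply: ler_piMr => //; rewrite ltW.
    lra.
  have := le_trans (heps _ ht) (env_le phi lam xt y).
  rewrite Em Ep -EFinD lee_fin.
  have -> : y - xt = (1 - t) *: (y - xbar).
    by apply/rowP => i; rewrite /xt !mxE; ring.
  rewrite sqnormZ -/Q.
  have -> : (1 - t) ^+ 2 * Q = Q - 2 * s + s * (s / Q).
    by rewrite /t; field; rewrite gt_eqF.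
  have : s * (s / Q) <= s.
    by apply: ler_piMr; [exact: ltW | rewrite ler_pdivrMr // mul1r].
  move=> h1 h2.
  have h3 : (2 * lam)^-1 * (Q - 2 * s + s * (s / Q)) <= (2 * lam)^-1 * (Q - s).
    by apply: ler_wpM2l; [exact: ltW | lra].
  have h4 : s / (2 * lam) = (2 * lam)^-1 * s by rewrite mulrC.
  have h5 : (2 * lam)^-1 * (Q - s) = (2 * lam)^-1 * Q - (2 * lam)^-1 * s by ring.
  lra.
split; first by rewrite /in_dom hf ltey.
exists eps; split => // x hx.
rewrite hf -mf -Em; apply: le_trans (heps x hx) _; exact: env_phi.
Qed.
End S3.
Arguments dir2 {R n}.

Section S4.
Variables (R : realType) (n : nat) (phi : 'rV[R]_n -> \bar R).

Lemma dir1 (c l1 lam f eps : R) (x1 xbar : 'rV[R]_n) : never_minfty phi ->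
  (forall y, c%:E <= phi y + (((2 * l1)^-1 * sqnorm (y - x1))%R)%:E)%E ->
  0 < lam -> 4 * lam <= l1 -> phi xbar = f%:E -> 0 < eps ->
  (forall x, sqnorm (x - xbar) < eps ^+ 2 -> (phi xbar <= phi x)%E) ->
  lam * (4 * (`|f - c + (2 * (eps ^+ 2 / 4) + 2 * sqnorm (xbar - x1)) / l1| + 1))
     <= eps ^+ 2 / 4 ->
  local_minimizer (moreau_env lam phi) xbar.
Proof.
move=> hnm hc lam0 hl hf eps0 hmin hlam.
have l10 : 0 < l1 by lra.
set q := eps ^+ 2 / 4 in hlam.
set K := sqnorm (xbar - x1) in hlam.
set N := f - c + (2 * q + 2 * K) / l1 in hlam.
split; first by apply: le_lt_trans (env_phi phi lam xbar) _; rewrite hf ltey.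
exists (eps / 2); split; first by rewrite divr_gt0.
move=> x hx.
have hq : (eps / 2) ^+ 2 = q by rewrite /q; field.
rewrite hq in hx.
apply: le_trans (env_phi phi lam xbar) _; rewrite hf; apply: env_ge => y.
have hQ0 : 0 <= (2 * lam)^-1 * sqnorm (y - x).
  by rewrite mulr_ge0 ?sqnorm_ge0 // invr_ge0 mulr_ge0 // ltW.
have [hy|hy] := ltP (sqnorm (y - xbar)) (eps ^+ 2).
  by apply: le_trans (leeDl _ _); [rewrite -hf; exact: hmin | rewrite lee_fin].
apply: le_trans (prox_lb phi c l1 lam x1 hnm hc lam0 hl x y); rewrite lee_fin.
have t1 : sqnorm (y - xbar) <= 2 * sqnorm (y - x) + 2 * sqnorm (x - xbar).
  have -> : y - xbar = (y - x) + (x - xbar) by rewrite addrA subrK.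
  exact: sqnorm_tri.
have t2 : sqnorm (x - x1) <= 2 * sqnorm (x - xbar) + 2 * K.
  have -> : x - x1 = (x - xbar) + (xbar - x1) by rewrite addrA subrK.
  exact: sqnorm_tri.
have e2 : eps ^+ 2 = 4 * q by rewrite /q; field.
rewrite e2 in hy.
have Qq : q <= sqnorm (y - x) by lra.
have S1 : sqnorm (x - x1) / l1 <= (2 * q + 2 * K) / l1.
  by rewrite ler_pM2r ?invr_gt0 //; lra.
have l4 : 0 < 4 * lam by rewrite mulr_gt0.
have Q1 : `|N| + 1 <= sqnorm (y - x) / (4 * lam).
  rewrite ler_pdivlMr //; apply: le_trans Qq; apply: le_trans hlam.
  rewrite le_eqVlt; apply/orP; left; apply/eqP; ring.
have NN : N <= `|N| := ler_norm N.
move: NN; rewrite /N; lra.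
Qed.
End S4.
Arguments dir1 {R n}.

End Helpers.
Import Helpers.

Theorem theorem3p2 (R : realType) (n : nat) (phi : 'rV[R]_n -> \bar R)
  (xbar : 'rV[R]_n) :
  never_minfty phi -> prox_bounded phi -> lsc_around phi xbar -> in_dom phi xbar ->
  exists lam0 : R, 0 < lam0 /\
    forall lam : R, 0 < lam -> lam < lam0 ->
      (local_minimizer phi xbar <-> local_minimizer (moreau_env lam phi) xbar).
Proof.
move=> hnm [l1 [l10 [x1 hx1]]] [r [r0 hr]] hdom.
have hlsc : lsc_at phi xbar by apply: hr; rewrite sqnorm_sub0 exprn_gt0.
case Ef : (phi xbar) hdom => [f| |] hdom; last first.
- by have := hnm xbar; rewrite Ef.
- by rewrite /in_dom Ef in hdom.
have [c hc] : exists c : R, forall y,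
    (c%:E <= phi y + (((2 * l1)^-1 * sqnorm (y - x1))%R)%:E)%E.
  case Ee : (moreau_env l1 phi x1) hx1 => [e| |] hx1.
  - by exists e => y; rewrite -Ee; exact: env_le.
  - exists 0 => y; have := env_le phi l1 x1 y; rewrite Ee => h.
    by apply: le_trans h; exact: leey.
  - by [].
case: (pselect (local_minimizer phi xbar)) => hlm.
  have [_ [eps [eps0 heps]]] := hlm.
  set N := `|f - c + (2 * (eps ^+ 2 / 4) + 2 * sqnorm (xbar - x1)) / l1| + 1.
  have N0 : 0 < N by rewrite /N; have := normr_ge0 (f - c + (2 * (eps ^+ 2 / 4) + 2 * sqnorm (xbar - x1)) / l1); lra.
  have q0 : 0 < eps ^+ 2 / 4 by rewrite divr_gt0 // exprn_gt0.
  exists (Num.min (l1 / 4) ((eps ^+ 2 / 4) / (4 * N))); split.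
    by rewrite lt_min !divr_gt0 // mulr_gt0.
  move=> lam lam0; rewrite lt_min => /andP [h1 h2].
  have hl : 4 * lam <= l1 by lra.
  split => hh.
  - apply: (dir1 phi c l1 lam f eps x1 xbar hnm hc lam0 hl Ef eps0 heps).
    rewrite -/N.
    by apply: ltW; move: h2; rewrite ltr_pdivlMr // mulr_gt0.
  - exact: (dir2 phi c l1 lam f x1 xbar hnm hc lam0 hl Ef hlsc hh).
exists (l1 / 4); split; first by rewrite divr_gt0.
move=> lam lam0 hlt; have hl : 4 * lam <= l1 by lra.
split => hh; first by [].
exact: (dir2 phi c l1 lam f x1 xbar hnm hc lam0 hl Ef hlsc hh).
Qed.
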